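(* For all integers $n,m\ge 2$, \[ \gamma_{2t}(K_n\Box K_m)+1\le\gamma_{2t}(K_{n+1}\Box K_{m+1})\le\gamma_{2t}(K_n\Box K_m)+2. \]
   Context: For a graph $G=(V,E)$, a set $S\subseteq V$ is a total $2$-dominating set if every vertex of $V$ (including those in $S$) is adjacent to at least $2$ vertices of $S$; $\gamma_{2t}(G)$ is the minimum cardinality of such a set. $G\Box H$ denotes the Cartesian product: vertex set $V(G)\times V(H)$, with $(u_1,v_1)\sim(u_2,v_2)$ iff either $u_1=u_2$ and $v_1\sim v_2$, or $v_1=v_2$ and $u_1\sim u_2$. $K_n$ is the complete graph on $n$ vertices. *)

(* Defs.v *)
From mathcomp Require Import all_boot.
Set Implicit Arguments. Unset Strict Implicit. Unset Printing Implicit Defensive.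

(* A simple graph is a relation [e : rel T] on a finite type (symmetric, irreflexive). *)

Definition total2dom (T : finType) (e : rel T) (S : {set T}) : bool :=
  [forall v : T, 2 <= #|[set u in S | e v u]|].

(* gamma_{2t}: minimum cardinality of a total 2-dominating set
   (defaults to #|T| if none exists; irrelevant when one exists). *)
Definition gamma2t (T : finType) (e : rel T) : nat :=
  \big[minn/#|T|]_(S : {set T} | total2dom e S) #|S|.

Definition Krel {n : nat} : rel 'I_n := fun i j => i != j.

Definition boxrel (T1 T2 : finType) (e1 : rel T1) (e2 : rel T2) : rel (T1 * T2) :=
  fun x y => ((x.1 == y.1) && e2 x.2 y.2) || ((x.2 == y.2) && e1 x.1 y.1).

Definition gamma2t_KK (n m : nat) : nat := gamma2t (boxrel (@Krel n) (@Krel m)).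

(* Main.v *)
Require Import Defs.
From mathcomp Require Import all_boot.
From mathcomp Require Import zify.
Set Implicit Arguments. Unset Strict Implicit. Unset Printing Implicit Defensive.

Ltac gen_bools := 
  try change (nat_of_bool true) with 1 in *; try change (nat_of_bool false) with 0 in *;
  repeat match goal with |- context [nat_of_bool ?b] =>
  let x := fresh "nb" in have := leq_b1 b; move: (nat_of_bool b) => x end.
Ltac blia := gen_bools; lia.


Section Counts.
Variables n m : nat.
Implicit Types (S : {set 'I_n * 'I_m}).
Definition rc S i := #|[set j | (i, j) \in S]|.
Definition cc S j := #|[set i | (i, j) \in S]|.
Definition t2 S := forall i j, 2 + 2 * ((i, j) \in S) <= rc S i + cc S j.

Lemma nbr_count S (v : 'I_n * 'I_m) :
  #|[set u in S | boxrel (@Krel n) (@Krel m) v u]| + 2 * (v \in S) = rc S v.1 + cc S v.2.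
Proof.
case: v => i j /=.
set A := [set u in S | u.1 == i]. set B := [set u in S | u.2 == j].
have hA : #|A| = rc S i.
  have inj1 : injective (fun b : 'I_m => (i,b)) by move=> x y [].
  rewrite /rc -(card_imset _ inj1).
  apply: eq_card => -[a b]; rewrite !inE /=.
  apply/andP/imsetP => [[hs /eqP <-]|[b' ]]; first by exists b; rewrite ?inE.
  by rewrite inE => hb [-> ->].
have hB : #|B| = cc S j.
  have inj1 : injective (fun a : 'I_n => (a,j)) by move=> x y [].
  rewrite /cc -(card_imset _ inj1).
  apply: eq_card => -[a b]; rewrite !inE /=.
  apply/andP/imsetP => [[hs /eqP <-]|[a' ]]; first by exists a; rewrite ?inE.
  by rewrite inE => ha [-> ->].
have hI : #|A :&: B| = ((i,j) \in S).
  case hs: ((i,j) \in S).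
    rewrite /= -(cards1 (i,j)); apply: eq_card => -[a b]; rewrite !inE /=.
    apply/idP/idP => [/andP[/andP[_ /eqP->] /andP[_ /eqP->]]|/eqP[->->]] //.
    by rewrite hs !eqxx.
  apply/eqP; rewrite cards_eq0; apply/eqP; rewrite /A /B; apply/setP => -[a b]; rewrite !inE /=.
  apply/negbTE/negP => /andP[/andP[h /eqP ha] /andP[_ /eqP hb]].
  by move: h; rewrite ha hb hs.
have hU : #|A :|: B| = #|[set u in S | boxrel (@Krel n) (@Krel m) (i,j) u]| + ((i,j) \in S).
  rewrite (cardsD1 (i,j)) addnC; congr (_ + _).
    apply: eq_card => -[a b]; rewrite !inE /boxrel /Krel /=.
    rewrite xpair_eqE [i == a]eq_sym [j == b]eq_sym.
    by case: (a == i); case: (b == j); case: ((a, b) \in S).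
  by rewrite /A /B !inE /= !eqxx !andbT orbb.
have := cardsUI A B; rewrite hU hI hA hB. by move=> h; rewrite -h mul2n -addnn addnA.
Qed.
End Counts.


Lemma t2P n m (S : {set 'I_n * 'I_m}) : total2dom (boxrel (@Krel n) (@Krel m)) S <-> t2 S.
Proof.
split => [/forallP h i j | h].
  have := h (i,j); have := nbr_count S (i,j) => /= <-.
  by rewrite leq_add2r.
apply/forallP => -[i j]; have := h i j; have := nbr_count S (i,j) => /= <-.
by rewrite leq_add2r.
Qed.

Lemma cardlift k (r : 'I_k.+1) (P : pred 'I_k.+1) :
  #|[set i | P i]| = #|[set i : 'I_k | P (lift r i)]| + P r.
Proof.
rewrite (cardsD1 r) inE addnC; congr (_ + _).
rewrite -(card_imset _ (@lift_inj _ r)); apply: eq_card => x; rewrite !inE.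
case: (unliftP r x) => [y ->|->].
  by rewrite eq_sym neq_lift /= (mem_imset _ _ (@lift_inj _ r)) inE.
rewrite eqxx /=; apply/esym/negbTE/imsetP => -[y _ /eqP].
by rewrite (negbTE (neq_lift _ _)).
Qed.

Lemma sum_cc n m (S : {set 'I_n * 'I_m}) : #|S| = \sum_j cc S j.
Proof.
transitivity (\sum_i \sum_j (if ((i, j) \in S) then 1 else 0)).
  rewrite pair_big /= -sum1_card big_mkcond /=.
  by apply: eq_big => // -[a b].
rewrite exchange_big /=; apply: eq_bigr => j _.
by rewrite /cc -sum1_card [RHS]big_mkcond; apply: eq_bigr => i _; rewrite inE.
Qed.


Section More.
Variables n m : nat.
Implicit Types (S : {set 'I_n * 'I_m}).

Lemma rc_sub S S' i : S \subset S' -> rc S i <= rc S' i.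
Proof.
move=> /subsetP h; apply: subset_leq_card; apply/subsetP => j; rewrite !inE; exact: h.
Qed.
Lemma cc_sub S S' j : S \subset S' -> cc S j <= cc S' j.
Proof.
move=> /subsetP h; apply: subset_leq_card; apply/subsetP => i; rewrite !inE; exact: h.
Qed.

Lemma rc_add S x i : x \notin S -> rc (x |: S) i = rc S i + (x.1 == i).
Proof.
case: x => a b /= hx; rewrite /rc.
case: (a =P i) => [<-|ne] /=.
  have -> : [set j | (a, j) \in (a, b) |: S] = b |: [set j | (a, j) \in S].
    by apply/setP => j; rewrite !inE xpair_eqE eqxx.
  by rewrite cardsU1 inE hx addnC.
rewrite addn0; apply: eq_card => j; rewrite !inE xpair_eqE.
by case: (i =P a) => // e; case: ne.
Qed.

Lemma cc_add S x j : x \notin S -> cc (x |: S) j = cc S j + (x.2 == j).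
Proof.
case: x => a b /= hx; rewrite /cc.
case: (b =P j) => [<-|ne] /=.
  have -> : [set i | (i, b) \in (a, b) |: S] = a |: [set i | (i, b) \in S].
    by apply/setP => i; rewrite !inE xpair_eqE eqxx andbT.
  by rewrite cardsU1 inE hx addnC.
rewrite addn0; apply: eq_card => i; rewrite !inE xpair_eqE.
by case: (j =P b) => [e|]; [case: ne|rewrite andbF].
Qed.

Lemma card2_le (A : {set 'I_n}) x y : x \in A -> y \in A -> x != y -> 2 <= #|A|.
Proof. by move=> hx hy hxy; apply/card_gt1P; exists x, y. Qed.

Lemma card_ge1 (T : finType) (A : {set T}) x : x \in A -> 1 <= #|A|.
Proof. by move=> hx; apply/card_gt0P; exists x. Qed.

Lemma card_le1_eq (T : finType) (A : {set T}) x y : #|A| <= 1 -> x \in A -> y \in A -> x = y.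
Proof. by move=> /card_le1_eqP h hx hy; apply: h. Qed.

End More.

Definition tr n m (S : {set 'I_n * 'I_m}) : {set 'I_m * 'I_n} := [set x | (x.2, x.1) \in S].

Lemma rc_tr n m (S : {set 'I_n * 'I_m}) j : rc (tr S) j = cc S j.
Proof. by apply: eq_card => i; rewrite !inE. Qed.
Lemma cc_tr n m (S : {set 'I_n * 'I_m}) i : cc (tr S) i = rc S i.
Proof. by apply: eq_card => j; rewrite !inE. Qed.
Lemma tr_t2 n m (S : {set 'I_n * 'I_m}) : t2 S -> t2 (tr S).
Proof. move=> h j i; rewrite rc_tr cc_tr inE /= [X in _ <= X]addnC; exact: h. Qed.
Lemma trK n m (S : {set 'I_n * 'I_m}) : tr (tr S) = S.
Proof. by apply/setP => -[a b]; rewrite !inE. Qed.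
Lemma card_tr n m (S : {set 'I_n * 'I_m}) : #|tr S| = #|S|.
Proof.
have inj : injective (fun x : 'I_n * 'I_m => (x.2, x.1)) by move=> [a b] [c d] [-> ->].
rewrite -(card_imset _ inj); apply: eq_card => -[a b]; rewrite inE.
apply/idP/imsetP => [h|[[c d] h [-> ->]] //]; by exists (b, a).
Qed.

Lemma sum_rc n m (S : {set 'I_n * 'I_m}) : #|S| = \sum_i rc S i.
Proof. rewrite -card_tr sum_cc; apply: eq_bigr => i _; exact: cc_tr. Qed.


Lemma bigmin_le (T : finType) (P : pred T) (F : T -> nat) d x :
  P x -> \big[minn/d]_(i | P i) F i <= F x.
Proof.
move=> Px; have : x \in index_enum T by rewrite mem_index_enum.
elim: (index_enum T) => [|a r IH] //; rewrite inE big_cons.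
case/orP => [/eqP <-|xr]; first by rewrite Px geq_minl.
case: (P a); last exact: IH.
by rewrite geq_min IH ?orbT.
Qed.

Lemma t2_full n m : 2 <= n -> 2 <= m -> t2 [set: 'I_n * 'I_m].
Proof.
move=> hn hm i j; rewrite inE /rc /cc.
have -> : [set j0 | (i, j0) \in [set: 'I_n * 'I_m]] = setT by apply/setP => x; rewrite !inE.
have -> : [set i0 | (i0, j) \in [set: 'I_n * 'I_m]] = setT by apply/setP => x; rewrite !inE.
rewrite !cardsT !card_ord; lia.
Qed.

Lemma gamma_le n m (S : {set 'I_n * 'I_m}) : t2 S -> gamma2t_KK n m <= #|S|.
Proof. by move=> /t2P h; apply: bigmin_le. Qed.

Lemma gamma_attained n m : 2 <= n -> 2 <= m ->
  exists S : {set 'I_n * 'I_m}, t2 S /\ #|S| = gamma2t_KK n m.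
Proof.
move=> hn hm; rewrite /gamma2t_KK /gamma2t.
apply: (big_ind (fun y => exists S : {set 'I_n * 'I_m}, t2 S /\ #|S| = y)).
- by exists setT; split; [exact: t2_full | rewrite cardsT].
- move=> x y [S [h1 <-]] [S' [h2 <-]]; case: (leqP #|S| #|S'|) => h.
    by exists S; split => //; rewrite (minn_idPl h).
  by exists S'; split => //; rewrite (minn_idPr (ltnW h)).
- by move=> S /t2P h; exists S.
Qed.



Lemma liftF k (h : 'I_k) i : (lift h i == h) = false.
Proof. by apply/negbTE; rewrite eq_sym neq_lift. Qed.
Lemma liftF' k (h : 'I_k) i : (h == lift h i) = false.
Proof. by apply/negbTE; rewrite neq_lift. Qed.

Section Emb.
Variables n m : nat.
Variables (r : 'I_n.+1) (c : 'I_m.+1).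

Definition pre (S' : {set 'I_n.+1 * 'I_m.+1}) : {set 'I_n * 'I_m} :=
  [set x | (lift r x.1, lift c x.2) \in S'].
Definition emb (S : {set 'I_n * 'I_m}) : {set 'I_n.+1 * 'I_m.+1} :=
  [set (lift r x.1, lift c x.2) | x in S].

Lemma emb_inj : injective (fun x : 'I_n * 'I_m => (lift r x.1, lift c x.2)).
Proof. move=> [a b] [a' b'] e; have ha := f_equal fst e; have hb := f_equal snd e; simpl in ha, hb. by rewrite (lift_inj ha) (lift_inj hb). Qed.

Lemma mem_emb S i j : ((lift r i, lift c j) \in emb S) = ((i, j) \in S).
Proof. by rewrite /emb -[(lift r i, lift c j)]/((fun x : 'I_n * 'I_m => (lift r x.1, lift c x.2)) (i, j)) (mem_imset _ _ emb_inj). Qed.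
Lemma emb_r S b : (r, b) \notin emb S.
Proof. by apply/imsetP => -[[x y] _ [/eqP]]; rewrite (negbTE (neq_lift _ _)). Qed.
Lemma emb_c S a : (a, c) \notin emb S.
Proof. by apply/imsetP => -[[x y] _ [_ /eqP]]; rewrite (negbTE (neq_lift _ _)). Qed.
Lemma card_emb S : #|emb S| = #|S|.
Proof. exact: card_imset emb_inj. Qed.

Lemma rc_pre S' i : rc S' (lift r i) = rc (pre S') i + ((lift r i, c) \in S').
Proof.
rewrite /rc (cardlift c (fun j => (lift r i, j) \in S')); congr (_ + _).
by apply: eq_card => j; rewrite !inE.
Qed.
Lemma cc_pre S' j : cc S' (lift c j) = cc (pre S') j + ((r, lift c j) \in S').
Proof.
rewrite /cc (cardlift r (fun i => (i, lift c j) \in S')); congr (_ + _).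
by apply: eq_card => i; rewrite !inE.
Qed.
End Emb.

Lemma card2_geq (T : finType) (A : {set T}) x y : x \in A -> y \in A -> x != y -> 2 <= #|A|.
Proof. by move=> hx hy hxy; apply/card_gt1P; exists x, y. Qed.

Lemma up1 n m (S : {set 'I_n * 'I_m}) : 2 <= n -> 2 <= m -> t2 S ->
  (forall j, 2 <= cc S j) ->
  exists S' : {set 'I_n.+1 * 'I_m.+1}, t2 S' /\ #|S'| <= #|S| + 2.
Proof.
move=> hn hm hS hc.
have m0 : 0 < m by lia.
have /card_gt1P [i0 [i1 [h0 h1 h01]]] := hc (Ordinal m0).
rewrite !inE in h0 h1.
set r := @ord_max n; set c := @ord_max m.
set S' := (lift r i0, c) |: ((lift r i1, c) |: emb r c S).
exists S'; split; last first.
  rewrite /S' !cardsU1 card_emb; case: (_ \notin _); case: (_ \notin _); lia.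
have hpre : pre r c S' = S.
  apply/setP => -[a b]; rewrite !inE !xpair_eqE mem_emb.
  by rewrite [lift c b == c]eq_sym (negbTE (neq_lift _ _)) !andbF.
have cc_c : 2 <= cc S' c.
  apply: (@card2_geq _ _ (lift r i0) (lift r i1)); rewrite ?inE ?eqxx ?orbT //.
  by apply: contra h01 => /eqP /lift_inj ->.
move=> a b.
case: (unliftP r a) => [i ->|->]; case: (unliftP c b) => [j ->|->].
- rewrite (rc_pre r c) (cc_pre r c) hpre.
  have -> : (lift r i, lift c j) \in S' = ((i, j) \in S).
    by move/setP: hpre => /(_ (i, j)); rewrite inE.
  have := hS i j; blia.
- rewrite (rc_pre r c) hpre.
  have hmem : (lift r i, c) \in S' = (i == i0) || (i == i1).
    by rewrite !inE !xpair_eqE !(inj_eq (@lift_inj _ r)) eqxx !andbT (negbTE (emb_c _ _ _ _)) orbF.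
  rewrite hmem; case: orP => [hi|]; last by move=> _; blia.
  have : 1 <= rc S i.
    by apply: (@card_ge1 _ _ (Ordinal m0)); rewrite inE; case: hi => /eqP ->.
  blia.
- rewrite (cc_pre r c) hpre.
  have -> : (r, lift c j) \in S' = false.
    by rewrite !inE !xpair_eqE (negbTE (emb_r _ _ _ _)) ?liftF ?liftF'.
  have := hc j; blia.
- have -> : (r, c) \in S' = false.
    by rewrite !inE !xpair_eqE (negbTE (emb_r _ _ _ _)) ?liftF ?liftF'.
  blia.
Qed.

Lemma up3 n m (S : {set 'I_n * 'I_m}) i1 j1 : t2 S ->
  (forall i, 1 <= rc S i) -> (forall j, 1 <= cc S j) ->
  2 <= rc S i1 -> 2 <= cc S j1 ->
  exists S' : {set 'I_n.+1 * 'I_m.+1}, t2 S' /\ #|S'| <= #|S| + 2.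
Proof.
move=> hS hr hc hi1 hj1.
set r := @ord_max n; set c := @ord_max m.
set S' := (r, lift c j1) |: ((lift r i1, c) |: emb r c S).
exists S'; split; last first.
  rewrite /S' !cardsU1 card_emb; case: (_ \notin _); case: (_ \notin _); lia.
have hpre : pre r c S' = S.
  apply/setP => -[a b]; rewrite !inE !xpair_eqE mem_emb.
  by rewrite ?liftF ?liftF' !andbF.
have cc_c : 1 <= cc S' c.
  by apply: (@card_ge1 _ _ (lift r i1)); rewrite !inE eqxx orbT.
have rc_r : 1 <= rc S' r.
  by apply: (@card_ge1 _ _ (lift c j1)); rewrite !inE eqxx.
move=> a b.
case: (unliftP r a) => [i ->|->]; case: (unliftP c b) => [j ->|->].
- rewrite (rc_pre r c) (cc_pre r c) hpre.
  have -> : (lift r i, lift c j) \in S' = ((i, j) \in S).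
    by move/setP: hpre => /(_ (i, j)); rewrite inE.
  have := hS i j; blia.
- rewrite (rc_pre r c) hpre.
  have hmem : (lift r i, c) \in S' = (i == i1).
    by rewrite !inE !xpair_eqE !(inj_eq (@lift_inj _ r)) ?liftF ?liftF' eqxx !andbT (negbTE (emb_c _ _ _ _)) orbF.
  rewrite hmem; case: eqP => [->|_]; have := hr i; blia.
- rewrite (cc_pre r c) hpre.
  have hmem : (r, lift c j) \in S' = (j == j1).
    by rewrite !inE !xpair_eqE !(inj_eq (@lift_inj _ c)) ?liftF ?liftF' eqxx (negbTE (emb_r _ _ _ _)) /= orbF.
  rewrite hmem; case: eqP => [->|_]; have := hc j; blia.
- have -> : (r, c) \in S' = false.
    by rewrite !inE !xpair_eqE (negbTE (emb_r _ _ _ _)) ?liftF ?liftF' /= ?andbF.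
  blia.
Qed.

Lemma up_main n m (S : {set 'I_n * 'I_m}) : 2 <= n -> 2 <= m -> t2 S ->
  exists S' : {set 'I_n.+1 * 'I_m.+1}, t2 S' /\ #|S'| <= #|S| + 2.
Proof.
move=> hn hm hS.
case: (boolP [forall j, 1 < cc S j]) => [/forallP hc|/forallPn [j0 hj0]]; first exact: up1.
case: (boolP [forall i, 1 < rc S i]) => [/forallP hr|/forallPn [i0 hi0]].
  have hr' : forall j, 1 < cc (tr S) j by move=> j; rewrite cc_tr.
  have [S'' [h1 h2]] := up1 hm hn (tr_t2 hS) hr'.
  exists (tr S''); split; [exact: tr_t2 | by rewrite card_tr -(card_tr S)].
rewrite -leqNgt in hj0; rewrite -leqNgt in hi0.
have hr : forall i, 1 <= rc S i by move=> i; have := hS i j0; blia.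
have hc : forall j, 1 <= cc S j by move=> j; have := hS i0 j; blia.
have /card_gt0P [j1] := hr i0; rewrite inE => h1.
have /card_gt0P [i1] := hc j0; rewrite inE => h2.
apply: (@up3 _ _ _ i1 j1) => //.
  by have := hS i1 j0; rewrite h2; blia.
by have := hS i0 j1; rewrite h1; blia.
Qed.



Lemma other_ord k (x : 'I_k) : 2 <= k -> exists y : 'I_k, y != x.
Proof.
move=> hk; have h0 : 0 < k by lia.
have h1 : 1 < k by lia.
case: (eqVneq (Ordinal h0) x) => [<-|]; last by exists (Ordinal h0).
by exists (Ordinal h1); apply/eqP => -[].
Qed.

Lemma fix1 n m (S0 : {set 'I_n * 'I_m}) i1 j1 : 2 <= n -> 2 <= m ->
  (forall i j, 2 + 2 * ((i, j) \in S0) <= rc S0 i + (i == i1) + cc S0 j + (j == j1)) ->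
  (forall i, 1 <= rc S0 i) -> (forall j, 1 <= cc S0 j) ->
  2 <= rc S0 i1 -> 2 <= cc S0 j1 ->
  exists S : {set 'I_n * 'I_m}, t2 S /\ #|S| <= #|S0| + 1.
Proof.
move=> hn hm H hr hc hi1 hj1.
case: (boolP ((i1, j1) \in S0)) => hin; last first.
  exists ((i1, j1) |: S0); split; last by rewrite cardsU1 hin addnC.
  move=> i j; rewrite (rc_add _ hin) (cc_add _ hin) !inE xpair_eqE /=.
  have := H i j.
  case: (i =P i1) => [->|ni]; case: (j =P j1) => [->|nj]; rewrite ?eqxx /=; try blia.
have [b [nb hb]] : exists b, b != j1 /\ forall j, j != j1 -> (i1, j) \in S0 ->
    rc S0 i1 + cc S0 j < 4 -> j = b.
  case: (boolP [exists j, [&& j != j1, (i1, j) \in S0 & rc S0 i1 + cc S0 j < 4]]).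
    move=> /existsP [j2 /and3P [n2 m2 l2]]; exists j2; split => // j nj mj lj.
    case: (eqVneq j j2) => // nj2; exfalso.
    have : 2 < rc S0 i1.
      apply/card_gt2P; exists j1, j, j2; rewrite !inE; split; first by split.
      by split => //; rewrite eq_sym.
    have := hc j; have := hc j2; lia.
  move=> /existsPn hn'; have [y hy] := other_ord j1 hm.
  exists y; split => // j nj mj lj; have := hn' j; by rewrite nj mj lj.
have [a [na ha]] : exists a, a != i1 /\ forall i, i != i1 -> (i, j1) \in S0 ->
    rc S0 i + cc S0 j1 < 4 -> i = a.
  case: (boolP [exists i, [&& i != i1, (i, j1) \in S0 & rc S0 i + cc S0 j1 < 4]]).
    move=> /existsP [i2 /and3P [n2 m2 l2]]; exists i2; split => // i ni mi li.
    case: (eqVneq i i2) => // ni2; exfalso.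
    have : 2 < cc S0 j1.
      apply/card_gt2P; exists i1, i, i2; rewrite !inE; split; first by split.
      by split => //; rewrite eq_sym.
    have := hr i; have := hr i2; lia.
  move=> /existsPn hn'; have [y hy] := other_ord i1 hn.
  exists y; split => // i ni mi li; have := hn' i; by rewrite ni mi li.
have na' : (i1 == a) = false by rewrite eq_sym (negbTE na).
have nb' : (j1 == b) = false by rewrite eq_sym (negbTE nb).
exists ((a, b) |: S0); split; last by rewrite cardsU1 addnC leq_add2l leq_b1.
have sub : S0 \subset (a, b) |: S0 by apply: subsetUr.
move=> i j; rewrite !inE xpair_eqE /=.
have := H i j; have := rc_sub i sub; have := cc_sub j sub.
case: (i =P i1) => [->|ni]; case: (j =P j1) => [->|nj].
- rewrite hin na' /=; blia.
- rewrite na' /= => hcs hrs h.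
  case: (boolP ((i1, j) \in S0)) => mj; last by blia.
  case: (leqP 4 (rc S0 i1 + cc S0 j)) => l; first by blia.
  have ejb := hb j (introN eqP nj) mj l; subst j.
  have hab : (a, b) \notin S0.
    apply/negP => hab.
    have : 2 <= cc S0 b by apply: (@card2_geq _ _ a i1); rewrite ?inE.
    lia.
  rewrite (cc_add _ hab) /= eqxx; have := hc b; blia.
- rewrite nb' andbF /= => hcs hrs h.
  case: (boolP ((i, j1) \in S0)) => mi; last by blia.
  case: (leqP 4 (rc S0 i + cc S0 j1)) => l; first by blia.
  have eia := ha i (introN eqP ni) mi l; subst i.
  have hab : (a, b) \notin S0.
    apply/negP => hab.
    have : 2 <= rc S0 a by apply: (@card2_geq _ _ b j1); rewrite ?inE // eq_sym.
    lia.
  rewrite (rc_add _ hab) /= eqxx; have := hr a; blia.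
- move=> hcs hrs h.
  case: (boolP ((i == a) && (j == b))) => [/andP [/eqP ei /eqP ej]|_]; last first.
    move: h; case hs: ((i, j) \in S0) => h; rewrite /=; apply: (leq_trans h); rewrite !addn0; exact: leq_add.
  subst i j; case: (boolP ((a, b) \in S0)) => hab; first by rewrite hab in h; rewrite /=; apply: (leq_trans h); rewrite !addn0; exact: leq_add.
  rewrite (rc_add _ hab) (cc_add _ hab) /= !eqxx.
  have := hr a; have := hc b; blia.
Qed.



Lemma low1 n m (S' : {set 'I_n.+1 * 'I_m.+1}) : 2 <= n -> 2 <= m ->
  (forall j, 2 <= cc S' j) ->
  exists S : {set 'I_n * 'I_m}, t2 S /\ #|S| < #|S'|.
Proof.
move=> hn hm hc.
have h0 : 0 < n by lia.
have h1 : 1 < n by lia.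
have ne : Ordinal h0 != Ordinal h1 by apply/eqP => -[].
set A := [set Ordinal h0; Ordinal h1].
exists (setX A [set: 'I_m]); split.
  move=> i j; rewrite /rc /cc.
  have -> : [set i0 | (i0, j) \in setX A [set: 'I_m]] = A.
    by apply/setP => x; rewrite !inE andbT.
  rewrite /A cards2 ne !inE /= andbT.
  case: (boolP ((i == Ordinal h0) || (i == Ordinal h1))) => hi /=; last by blia.
  have -> : [set j0 | (i, j0) \in setX [set Ordinal h0; Ordinal h1] [set: 'I_m]] = setT.
    by apply/setP => x; rewrite !inE /= hi.
  rewrite cardsT card_ord; blia.
rewrite cardsX cardsT card_ord /A cards2 ne sum_cc.
have : \sum_(j < m.+1) 2 <= \sum_j cc S' j by apply: leq_sum => j _; exact: hc.
rewrite sum_nat_const card_ord; lia.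
Qed.

Lemma low_main n m (S' : {set 'I_n.+1 * 'I_m.+1}) : 2 <= n -> 2 <= m -> t2 S' ->
  exists S : {set 'I_n * 'I_m}, t2 S /\ #|S| < #|S'|.
Proof.
move=> hn hm hS.
case: (boolP [forall j, 1 < cc S' j]) => [/forallP hc|/forallPn [j0 hj0]]; first exact: low1.
case: (boolP [forall i, 1 < rc S' i]) => [/forallP hr|/forallPn [i0 hi0]].
  have hr' : forall j, 1 < cc (tr S') j by move=> j; rewrite cc_tr.
  have [S'' [h1 h2]] := low1 hm hn hr'.
  exists (tr S''); split; [exact: tr_t2 | by rewrite card_tr -(card_tr S')].
rewrite -leqNgt in hj0; rewrite -leqNgt in hi0.
have hr : forall i, 1 <= rc S' i by move=> i; have := hS i j0; blia.
have hc : forall j, 1 <= cc S' j by move=> j; have := hS i0 j; blia.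
have /card_gt0P [j1] := hr i0; rewrite inE => hj1.
have /card_gt0P [i1] := hc j0; rewrite inE => hi1.
have ccj1 : 3 <= cc S' j1 by have := hS i0 j1; rewrite hj1; blia.
have rci1 : 3 <= rc S' i1 by have := hS i1 j0; rewrite hi1; blia.
have n00 : (i0, j0) \notin S' by apply/negP => h; have := hS i0 j0; rewrite h; blia.
have uj : forall j, (i0, j) \in S' -> j = j1.
  move=> j hj; apply: (@card_le1_eq _ _ _ _ hi0); by rewrite inE.
have ui : forall i, (i, j0) \in S' -> i = i1.
  move=> i hi; apply: (@card_le1_eq _ _ _ _ hj0); by rewrite inE.
case: (unliftP j0 j1) => [j1' ej1|ej1]; last by move: n00; rewrite -{1}ej1 hj1.
case: (unliftP i0 i1) => [i1' ei1|ei1]; last by move: n00; rewrite -{1}ei1 hi1.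
set S0 := pre i0 j0 S'.
have er : forall i, ((lift i0 i, j0) \in S') = (i == i1').
  move=> i; apply/idP/eqP => [h|->]; last by rewrite -ei1.
  by apply: (@lift_inj _ i0); rewrite -ei1; exact: ui.
have ec : forall j, ((i0, lift j0 j) \in S') = (j == j1').
  move=> j; apply/idP/eqP => [h|->]; last by rewrite -ej1.
  by apply: (@lift_inj _ j0); rewrite -ej1; exact: uj.
have hrc : forall i, rc S' (lift i0 i) = rc S0 i + (i == i1').
  by move=> i; rewrite (rc_pre i0 j0) er.
have hcc : forall j, cc S' (lift j0 j) = cc S0 j + (j == j1').
  by move=> j; rewrite (cc_pre i0 j0) ec.
have [S [tS cS]] : exists S : {set 'I_n * 'I_m}, t2 S /\ #|S| <= #|S0| + 1.
  apply: (@fix1 _ _ S0 i1' j1') => //.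
  - move=> i j; have := hS (lift i0 i) (lift j0 j).
    by rewrite hrc hcc inE /= addnA.
  - move=> i; have := hr (lift i0 i); rewrite hrc.
    case: eqP => [->|_]; last by blia.
    have := rci1; rewrite ei1 hrc eqxx; blia.
  - move=> j; have := hc (lift j0 j); rewrite hcc.
    case: eqP => [->|_]; last by blia.
    have := ccj1; rewrite ej1 hcc eqxx; blia.
  - have := rci1; rewrite ei1 hrc eqxx; blia.
  - have := ccj1; rewrite ej1 hcc eqxx; blia.
exists S; split => //.
have sub : (i0, j1) |: ((i1, j0) |: emb i0 j0 S0) \subset S'.
  apply/subsetP => x; rewrite !inE => /orP [/eqP ->//|/orP [/eqP ->//|]].
  by case/imsetP => -[a b]; rewrite inE => h ->.
have := subset_leq_card sub.
rewrite !cardsU1 card_emb !inE !xpair_eqE (negbTE (emb_r _ _ _ _)) (negbTE (emb_c _ _ _ _)).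
have -> : (i0 == i1) = false.
  by apply/negbTE/eqP => e; move: n00; rewrite e hi1.
rewrite /= => h; apply: leq_trans h; rewrite !add1n ltnS -addn1.
exact: cS.
Qed.

Theorem lemma11 (n m : nat) (hn : 2 <= n) (hm : 2 <= m) :
  gamma2t_KK n m + 1 <= gamma2t_KK n.+1 m.+1 <= gamma2t_KK n m + 2.
Proof.
apply/andP; split.
- have hn' : 2 <= n.+1 by apply: leqW.
  have hm' : 2 <= m.+1 by apply: leqW.
  have [S' [t' c']] := gamma_attained hn' hm'.
  have [S [t c]] := low_main hn hm t'.
  rewrite -c' addn1; exact: leq_ltn_trans (gamma_le t) c.
- have [S [t c]] := gamma_attained hn hm.
  have [S' [t' c']] := up_main hn hm t.
  rewrite -c; exact: leq_trans (gamma_le t') c'.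
Qed.
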